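(* Define the function $h(b)=(b^2-1)^7\Bigl(b\bigl(\alpha_{1,-6}\beta_{0,-4}-\alpha_{0,-6}\beta_{1,-4}\bigr)-\bigl(\alpha_{1,-6}\beta_{1,-4}-\alpha_{2,-6}\beta_{0,-4}\bigr)\Bigr)$ for $|b|>1$. Then: 1. $h$ is the restriction of a polynomial in $b$ of degree at most $5$, whose $b^5$-coefficient equals $\frac{2f(r_1,r_2)}{9m_0m_\infty n_1n_2}$; 2. $\lim_{b\to1^+}h(b)>0$ and $\lim_{b\to-1^-}h(b)>0$. Consequently, if $f(r_1,r_2)\neq0$, then $h$ has a zero $b$ with $|b|>1$.
   Context: Let $n_1,n_2$ be nonzero integers, $m_0,m_\infty$ positive integers, and $r_1,r_2$ reals with $0<|r_i|<1$ and $r_in_i>0$. Put $p_c(t)=(1+r_1t)(1+r_2t)$. For $|b|>1$ and $r=0,1,2$, define - $\alpha_{r,-6}=\int_{-1}^1(t+b)^{-6}t^rp_c(t)\,dt$; - $\beta_{r,-4}=\int_{-1}^1\bigl(\frac{2r_1}{n_1}(1+r_2t)+\frac{2r_2}{n_2}(1+r_1t)\bigr)t^r(t+b)^{-4}dt+(-1)^r(b-1)^{-4}\frac{p_c(-1)}{m_\infty}+(1+b)^{-4}\frac{p_c(1)}{m_0}$. Define $f(r_1,r_2)=9(m_0-m_\infty)n_1n_2-6(m_0+m_\infty)n_1n_2(r_1+r_2)+6(m_0-m_\infty)n_1n_2r_1r_2+3n_2(4m_0m_\infty-n_1(m_0-m_\infty))r_1^2+3n_1(4m_0m_\infty-n_2(m_0-m_\infty))r_2^2-(4m_0m_\infty(n_1+n_2)-3(m_0-m_\infty)n_1n_2)r_1^2r_2^2$.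 *)

(* Defs.v *)
From Stdlib Require Import Reals ZArith.
From Coquelicot Require Import Coquelicot.
Open Scope R_scope.

Definition pc (r1 r2 t : R) : R := (1 + r1 * t) * (1 + r2 * t).

Definition alpha6 (r1 r2 : R) (r : nat) (b : R) : R :=
  RInt (fun t => / (t + b) ^ 6 * t ^ r * pc r1 r2 t) (-1) 1.

Definition beta4 (n1 n2 : Z) (m0 minf : nat) (r1 r2 : R) (r : nat) (b : R) : R :=
  RInt (fun t => (2 * r1 / IZR n1 * (1 + r2 * t) + 2 * r2 / IZR n2 * (1 + r1 * t))
                  * t ^ r * / (t + b) ^ 4) (-1) 1
  + (-1) ^ r * / (b - 1) ^ 4 * pc r1 r2 (-1) / INR minf
  + / (1 + b) ^ 4 * pc r1 r2 1 / INR m0.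

Definition hfun (n1 n2 : Z) (m0 minf : nat) (r1 r2 : R) (b : R) : R :=
  let a := fun r => alpha6 r1 r2 r b in
  let be := fun r => beta4 n1 n2 m0 minf r1 r2 r b in
  (b ^ 2 - 1) ^ 7 *
  (b * (a 1%nat * be 0%nat - a 0%nat * be 1%nat)
   - (a 1%nat * be 1%nat - a 2%nat * be 0%nat)).

Definition ffun (n1 n2 : Z) (m0 minf : nat) (r1 r2 : R) : R :=
  let N1 := IZR n1 in let N2 := IZR n2 in
  let M0 := INR m0 in let Mi := INR minf in
  9 * (M0 - Mi) * N1 * N2
  - 6 * (M0 + Mi) * N1 * N2 * (r1 + r2)
  + 6 * (M0 - Mi) * N1 * N2 * r1 * r2
  + 3 * N2 * (4 * M0 * Mi - N1 * (M0 - Mi)) * r1 ^ 2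
  + 3 * N1 * (4 * M0 * Mi - N2 * (M0 - Mi)) * r2 ^ 2
  - (4 * M0 * Mi * (N1 + N2) - 3 * (M0 - Mi) * N1 * N2) * r1 ^ 2 * r2 ^ 2.

(* Main.v *)
Require Import Defs.
From Stdlib Require Import Reals ZArith Lra Lia.
From Coquelicot Require Import Coquelicot.
Open Scope R_scope.


Lemma tb_neq (b t : R) : 1 < Rabs b -> -1 <= t <= 1 -> t + b <> 0.
Proof. intros hb ht. unfold Rabs in hb; destruct (Rcase_abs b); lra. Qed.

Definition Kv (n : nat) (b : R) : R := (/ (b - 1) ^ n - / (b + 1) ^ n) / INR n.

Lemma Kint (m : nat) (b : R) : 1 < Rabs b ->
  is_RInt (fun t => / (t + b) ^ (S (S m))) (-1) 1 (Kv (S m) b).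
Proof.
  intros hb.
  assert (H: is_RInt (fun t => / (t + b) ^ (S (S m))) (-1) 1
     (minus ((fun t => - / (INR (S m) * (t + b) ^ (S m))) 1)
            ((fun t => - / (INR (S m) * (t + b) ^ (S m))) (-1)))).
  { apply (is_RInt_derive (fun t => - / (INR (S m) * (t + b) ^ (S m))) (fun t => / (t + b) ^ (S (S m)))).
    - intros x Hx. rewrite Rmin_left in Hx by lra. rewrite Rmax_right in Hx by lra.
      pose proof (tb_neq b x hb Hx) as hx.
      assert (hn : INR (S m) <> 0) by (apply not_0_INR; lia).
      auto_derive; change (match m with 0%nat => 1 | S _ => INR m + 1 end) with (INR (S m)).
      + apply Rmult_integral_contrapositive; split; auto.
        apply Rmult_integral_contrapositive; split; auto. apply pow_nonzero; auto.
      + simpl pow. field. split; auto. apply pow_nonzero; auto.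
    - intros x Hx. rewrite Rmin_left in Hx by lra. rewrite Rmax_right in Hx by lra.
      pose proof (tb_neq b x hb Hx) as hx.
      apply (ex_derive_continuous (fun t => / (t + b) ^ (S (S m)))). auto_derive. change ((x + b) ^ (S (S m)) <> 0). apply pow_nonzero; auto. }
  replace (Kv (S m) b) with (minus ((fun t => - / (INR (S m) * (t + b) ^ (S m))) 1)
            ((fun t => - / (INR (S m) * (t + b) ^ (S m))) (-1))); auto.
  pose proof (tb_neq b 1 hb ltac:(lra)). pose proof (tb_neq b (-1) hb ltac:(lra)).
  assert (hn : INR (S m) <> 0) by (apply not_0_INR; lia).
  unfold Kv. set (nr := INR (S m)) in *. clearbody nr. unfold minus, plus, opp; simpl.
  replace (-1 + b) with (b - 1) by ring. replace (1 + b) with (b + 1) in * by ring.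
  assert (b - 1 <> 0) by (replace (b-1) with (-1+b) by ring; auto).
  field. repeat split; auto; apply pow_nonzero; auto.
Qed.

Lemma isr_nil : is_RInt (fun _ : R => 0) (-1) 1 0.
Proof.
  pose proof (is_RInt_const (-1) 1 0) as H. unfold scal in H; simpl in H; unfold mult in H; simpl in H.
  rewrite Rmult_0_r in H. exact H.
Qed.

Lemma isr_cons (b c : R) (m : nat) f I : 1 < Rabs b -> is_RInt f (-1) 1 I ->
  is_RInt (fun t => c * / (t + b) ^ (S (S m)) + f t) (-1) 1 (c * Kv (S m) b + I).
Proof.
  intros hb hf.
  apply (is_RInt_plus (V:=R_CompleteNormedModule) (fun t => c * / (t + b) ^ (S (S m))) f).
  - apply (is_RInt_scal (V:=R_CompleteNormedModule) _ _ _ c). apply Kint; auto.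
  - exact hf.
Qed.

Lemma bnz (b : R) : 1 < Rabs b -> b - 1 <> 0 /\ b + 1 <> 0 /\ b ^ 2 - 1 <> 0.
Proof.
  intros hb. assert (b - 1 <> 0 /\ b + 1 <> 0) as [h1 h2] by (unfold Rabs in hb; destruct (Rcase_abs b); split; lra).
  split; [|split]; auto. replace (b ^ 2 - 1) with ((b - 1) * (b + 1)) by ring.
  apply Rmult_integral_contrapositive; split; auto.
Qed.

Lemma isr_ext (f g : R -> R) (l : R) : (forall x, -1 < x < 1 -> f x = g x) ->
  is_RInt (V:=R_CompleteNormedModule) f (-1) 1 l -> is_RInt (V:=R_CompleteNormedModule) g (-1) 1 l.
Proof.
  intros H1 H2. apply (is_RInt_ext f g); auto.
  intros x Hx. rewrite Rmin_left in Hx by lra. rewrite Rmax_right in Hx by lra. apply H1; auto.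
Qed.

Lemma is_RInt_eq_val (f : R -> R) a c (l l' : R) : is_RInt (V:=R_CompleteNormedModule) f a c l -> l = l' -> is_RInt (V:=R_CompleteNormedModule) f a c l'.
Proof. intros H ->; exact H. Qed.
Definition Apol0 (r1 r2 b : R) : R := (2/5) + (2/3)*r1*r2 + (-12/5)*b*r2 + (-12/5)*b*r1 + (4)*b^2 + (76/15)*b^2*r1*r2 + (-4)*b^3*r2 + (-4)*b^3*r1 + (2)*b^4 + (2/3)*b^4*r1*r2.
Definition Adec0 (r1 r2 b t : R) : R := ((1) + (-1)*b*r2 + (-1)*b*r1 + (1)*b^2*r1*r2) * / (t + b) ^ 6 + (((1)*r2 + (1)*r1 + (-2)*b*r1*r2) * / (t + b) ^ 5 + (((1)*r1*r2) * / (t + b) ^ 4 + (0))).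
Definition Apol1 (r1 r2 b : R) : R := (2/3)*r2 + (2/3)*r1 + (-12/5)*b + (-4)*b*r1*r2 + (76/15)*b^2*r2 + (76/15)*b^2*r1 + (-4)*b^3 + (-12/5)*b^3*r1*r2 + (2/3)*b^4*r2 + (2/3)*b^4*r1.
Definition Adec1 (r1 r2 b t : R) : R := ((-1)*b + (1)*b^2*r2 + (1)*b^2*r1 + (-1)*b^3*r1*r2) * / (t + b) ^ 6 + (((1) + (-2)*b*r2 + (-2)*b*r1 + (3)*b^2*r1*r2) * / (t + b) ^ 5 + (((1)*r2 + (1)*r1 + (-3)*b*r1*r2) * / (t + b) ^ 4 + (((1)*r1*r2) * / (t + b) ^ 3 + (0)))).
Definition Apol2 (r1 r2 b : R) : R := (2/3) + (2)*r1*r2 + (-4)*b*r2 + (-4)*b*r1 + (76/15)*b^2 + (4)*b^2*r1*r2 + (-12/5)*b^3*r2 + (-12/5)*b^3*r1 + (2/3)*b^4 + (2/5)*b^4*r1*r2.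
Definition Adec2 (r1 r2 b t : R) : R := ((1)*b^2 + (-1)*b^3*r2 + (-1)*b^3*r1 + (1)*b^4*r1*r2) * / (t + b) ^ 6 + (((-2)*b + (3)*b^2*r2 + (3)*b^2*r1 + (-4)*b^3*r1*r2) * / (t + b) ^ 5 + (((1) + (-3)*b*r2 + (-3)*b*r1 + (6)*b^2*r1*r2) * / (t + b) ^ 4 + (((1)*r2 + (1)*r1 + (-4)*b*r1*r2) * / (t + b) ^ 3 + (((1)*r1*r2) * / (t + b) ^ 2 + (0))))).
Definition Bpol0 (r1 r2 i1 i2 j0 ji b : R) : R := (1)*ji + (1)*j0 + (-1)*r2*ji + (1)*r2*j0 + (-4/3)*r2*i2 + (-1)*r1*ji + (1)*r1*j0 + (-4/3)*r1*i1 + (1)*r1*r2*ji + (1)*r1*r2*j0 + (4)*b*ji + (-4)*b*j0 + (-4)*b*r2*ji + (-4)*b*r2*j0 + (-4)*b*r1*ji + (-4)*b*r1*j0 + (4)*b*r1*r2*ji + (-4)*b*r1*r2*j0 + (16/3)*b*r1*r2*i2 + (16/3)*b*r1*r2*i1 + (6)*b^2*ji + (6)*b^2*j0 + (-6)*b^2*r2*ji + (6)*b^2*r2*j0 + (-8/3)*b^2*r2*i2 + (-6)*b^2*r1*ji + (6)*b^2*r1*j0 + (-8/3)*b^2*r1*i1 + (6)*b^2*r1*r2*ji + (6)*b^2*r1*r2*j0 + (4)*b^3*ji + (-4)*b^3*j0 + (-4)*b^3*r2*ji + (-4)*b^3*r2*j0 + (-4)*b^3*r1*ji + (-4)*b^3*r1*j0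 + (4)*b^3*r1*r2*ji + (-4)*b^3*r1*r2*j0 + (-16/3)*b^3*r1*r2*i2 + (-16/3)*b^3*r1*r2*i1 + (1)*b^4*ji + (1)*b^4*j0 + (-1)*b^4*r2*ji + (1)*b^4*r2*j0 + (4)*b^4*r2*i2 + (-1)*b^4*r1*ji + (1)*b^4*r1*j0 + (4)*b^4*r1*i1 + (1)*b^4*r1*r2*ji + (1)*b^4*r1*r2*j0.
Definition Bdec0 (r1 r2 i1 i2 b t : R) : R := ((2)*r2*i2 + (2)*r1*i1 + (-2)*b*r1*r2*i2 + (-2)*b*r1*r2*i1) * / (t + b) ^ 4 + (((2)*r1*r2*i2 + (2)*r1*r2*i1) * / (t + b) ^ 3 + (0)).
Definition Ipol0 (r1 r2 i1 i2 b : R) : R := (4/3)*r2*i2 + (4/3)*r1*i1 + (-16/3)*b*r1*r2*i2 + (-16/3)*b*r1*r2*i1 + (4)*b^2*r2*i2 + (4)*b^2*r1*i1.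
Definition Bpol1 (r1 r2 i1 i2 j0 ji b : R) : R := (-1)*ji + (1)*j0 + (1)*r2*ji + (1)*r2*j0 + (1)*r1*ji + (1)*r1*j0 + (-1)*r1*r2*ji + (1)*r1*r2*j0 + (-4)*r1*r2*i2 + (-4)*r1*r2*i1 + (-4)*b*ji + (-4)*b*j0 + (4)*b*r2*ji + (-4)*b*r2*j0 + (16/3)*b*r2*i2 + (4)*b*r1*ji + (-4)*b*r1*j0 + (16/3)*b*r1*i1 + (-4)*b*r1*r2*ji + (-4)*b*r1*r2*j0 + (-6)*b^2*ji + (6)*b^2*j0 + (6)*b^2*r2*ji + (6)*b^2*r2*j0 + (6)*b^2*r1*ji + (6)*b^2*r1*j0 + (-6)*b^2*r1*r2*ji + (6)*b^2*r1*r2*j0 + (8/3)*b^2*r1*r2*i2 + (8/3)*b^2*r1*r2*i1 + (-4)*b^3*ji + (-4)*b^3*j0 + (4)*b^3*r2*ji + (-4)*b^3*r2*j0 + (-16/3)*b^3*r2*i2 + (4)*b^3*r1*ji + (-4)*b^3*r1*j0 + (-16/3)*b^3*r1*i1 + (-4)*b^3*r1*r2*ji + (-4)*b^3*r1*r2*j0 + (-1)*b^4*ji + (1)*b^4*j0 + (1)*b^4*r2*ji + (1)*b^4*r2*j0 + (1)*b^4*r1*ji + (1)*b^4*r1*j0 + (-1)*b^4*r1*r2*ji + (1)*b^4*r1*r2*j0 + (4/3)*b^4*r1*r2*i2 + (4/3)*b^4*r1*r2*i1.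
Definition Bdec1 (r1 r2 i1 i2 b t : R) : R := ((-2)*b*r2*i2 + (-2)*b*r1*i1 + (2)*b^2*r1*r2*i2 + (2)*b^2*r1*r2*i1) * / (t + b) ^ 4 + (((2)*r2*i2 + (2)*r1*i1 + (-4)*b*r1*r2*i2 + (-4)*b*r1*r2*i1) * / (t + b) ^ 3 + (((2)*r1*r2*i2 + (2)*r1*r2*i1) * / (t + b) ^ 2 + (0))).
Definition Ipol1 (r1 r2 i1 i2 b : R) : R := (4)*r1*r2*i2 + (4)*r1*r2*i1 + (-16/3)*b*r2*i2 + (-16/3)*b*r1*i1 + (4/3)*b^2*r1*r2*i2 + (4/3)*b^2*r1*r2*i1.
Definition cc (r1 r2 i1 i2 j0 ji : R) (k : nat) : R := match k with 0%nat => (2/3)*ji + (2/3)*j0 + (-8/9)*r2*i2 + (-2/3)*r2^2*ji + (-2/3)*r2^2*j0 + (-8/9)*r1*i1 + (4/3)*r1*r2*ji + (4/3)*r1*r2*j0 + (-4/3)*r1*r2^2*ji + (4/3)*r1*r2^2*j0 + (8/3)*r1*r2^2*i1 + (-2/3)*r1^2*ji + (-2/3)*r1^2*j0 + (-4/3)*r1^2*r2*ji + (4/3)*r1^2*r2*j0 + (8/3)*r1^2*r2*i2 + (2)*r1^2*r2^2*ji + (2)*r1^2*r2^2*j0 | 1%nat => (2/3)*ji + (-2/3)*j0 + (-4/3)*r2*ji + (-4/3)*r2*j0 + (2/3)*r2^2*ji + (-2/3)*r2^2*j0 + (8/9)*r2^2*i2 + (-4/3)*r1*ji + (-4/3)*r1*j0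 + (20/3)*r1*r2*ji + (-20/3)*r1*r2*j0 + (-32/9)*r1*r2*i2 + (-32/9)*r1*r2*i1 + (-16/3)*r1*r2^2*ji + (-16/3)*r1*r2^2*j0 + (2/3)*r1^2*ji + (-2/3)*r1^2*j0 + (8/9)*r1^2*i1 + (-16/3)*r1^2*r2*ji + (-16/3)*r1^2*r2*j0 + (14/3)*r1^2*r2^2*ji + (-14/3)*r1^2*r2^2*j0 + (-8/3)*r1^2*r2^2*i2 + (-8/3)*r1^2*r2^2*i1 | 2%nat => (-16/3)*r2*ji + (16/3)*r2*j0 + (32/9)*r2*i2 + (16/3)*r2^2*ji + (16/3)*r2^2*j0 + (-16/3)*r1*ji + (16/3)*r1*j0 + (32/9)*r1*i1 + (40/3)*r1*r2*ji + (40/3)*r1*r2*j0 + (-8)*r1*r2^2*ji + (8)*r1*r2^2*j0 + (32/9)*r1*r2^2*i2 + (-32/9)*r1*r2^2*i1 + (16/3)*r1^2*ji + (16/3)*r1^2*j0 + (-8)*r1^2*r2*ji + (8)*r1^2*r2*j0 + (-32/9)*r1^2*r2*i2 + (32/9)*r1^2*r2*i1 + (8/3)*r1^2*r2^2*ji + (8/3)*r1^2*r2^2*j0 | 3%nat => (8/3)*ji + (-8/3)*j0 + (-8)*r2*ji + (-8)*r2*j0 + (16/3)*r2^2*ji + (-16/3)*r2^2*j0 + (-32/9)*r2^2*i2 + (-8)*r1*ji + (-8)*r1*j0 + (40/3)*r1*r2*ji + (-40/3)*r1*r2*j0 + (32/9)*r1*r2*i2 + (32/9)*r1*r2*i1 +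 (-16/3)*r1*r2^2*ji + (-16/3)*r1*r2^2*j0 + (16/3)*r1^2*ji + (-16/3)*r1^2*j0 + (-32/9)*r1^2*i1 + (-16/3)*r1^2*r2*ji + (-16/3)*r1^2*r2*j0 + (32/9)*r1^2*r2^2*i2 + (32/9)*r1^2*r2^2*i1 | 4%nat => (14/3)*ji + (14/3)*j0 + (-16/3)*r2*ji + (16/3)*r2*j0 + (-8/3)*r2*i2 + (2/3)*r2^2*ji + (2/3)*r2^2*j0 + (-16/3)*r1*ji + (16/3)*r1*j0 + (-8/3)*r1*i1 + (20/3)*r1*r2*ji + (20/3)*r1*r2*j0 + (-4/3)*r1*r2^2*ji + (4/3)*r1*r2^2*j0 + (-32/9)*r1*r2^2*i2 + (8/9)*r1*r2^2*i1 + (2/3)*r1^2*ji + (2/3)*r1^2*j0 + (-4/3)*r1^2*r2*ji + (4/3)*r1^2*r2*j0 + (8/9)*r1^2*r2*i2 + (-32/9)*r1^2*r2*i1 + (2/3)*r1^2*r2^2*ji + (2/3)*r1^2*r2^2*j0 | 5%nat => (2)*ji + (-2)*j0 + (-4/3)*r2*ji + (-4/3)*r2*j0 + (-2/3)*r2^2*ji + (2/3)*r2^2*j0 + (8/3)*r2^2*i2 + (-4/3)*r1*ji + (-4/3)*r1*j0 + (4/3)*r1*r2*ji + (-4/3)*r1*r2*j0 + (-2/3)*r1^2*ji + (2/3)*r1^2*j0 + (8/3)*r1^2*i1 + (2/3)*r1^2*r2^2*ji + (-2/3)*r1^2*r2^2*j0 + (-8/9)*r1^2*r2^2*i2 + (-8/9)*r1^2*r2^2*i1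 | _ => 0 end.
Lemma alpha_cf0 r1 r2 b : 1 < Rabs b -> alpha6 r1 r2 0 b = Apol0 r1 r2 b / (b ^ 2 - 1) ^ 5.
Proof.
  intros hb. pose proof (bnz b hb) as [h1 [h2 h3]]. unfold alpha6. apply is_RInt_unique.
  apply (isr_ext (Adec0 r1 r2 b)).
  - intros t Ht.
    assert (t + b <> 0) by (apply tb_neq; auto; lra). unfold Adec0, pc. field; repeat split; auto.
  - eapply is_RInt_eq_val.
    + unfold Adec0. do 3 (apply isr_cons; [exact hb|]). apply isr_nil.
    + unfold Kv, Apol0. simpl INR. field; repeat split; auto.
Qed.

Lemma alpha_cf1 r1 r2 b : 1 < Rabs b -> alpha6 r1 r2 1 b = Apol1 r1 r2 b / (b ^ 2 - 1) ^ 5.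
Proof.
  intros hb. pose proof (bnz b hb) as [h1 [h2 h3]]. unfold alpha6. apply is_RInt_unique.
  apply (isr_ext (Adec1 r1 r2 b)).
  - intros t Ht.
    assert (t + b <> 0) by (apply tb_neq; auto; lra). unfold Adec1, pc. field; repeat split; auto.
  - eapply is_RInt_eq_val.
    + unfold Adec1. do 4 (apply isr_cons; [exact hb|]). apply isr_nil.
    + unfold Kv, Apol1. simpl INR. field; repeat split; auto.
Qed.

Lemma alpha_cf2 r1 r2 b : 1 < Rabs b -> alpha6 r1 r2 2 b = Apol2 r1 r2 b / (b ^ 2 - 1) ^ 5.
Proof.
  intros hb. pose proof (bnz b hb) as [h1 [h2 h3]]. unfold alpha6. apply is_RInt_unique.
  apply (isr_ext (Adec2 r1 r2 b)).
  - intros t Ht.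
    assert (t + b <> 0) by (apply tb_neq; auto; lra). unfold Adec2, pc. field; repeat split; auto.
  - eapply is_RInt_eq_val.
    + unfold Adec2. do 5 (apply isr_cons; [exact hb|]). apply isr_nil.
    + unfold Kv, Apol2. simpl INR. field; repeat split; auto.
Qed.

Lemma int_cf0 r1 r2 N1 N2 b : N1 <> 0 -> N2 <> 0 -> 1 < Rabs b ->
  RInt (fun t => (2 * r1 / N1 * (1 + r2 * t) + 2 * r2 / N2 * (1 + r1 * t)) * t ^ 0 * / (t + b) ^ 4) (-1) 1
  = Ipol0 r1 r2 (/ N1) (/ N2) b / (b ^ 2 - 1) ^ 3.
Proof.
  intros hn1 hn2 hb. pose proof (bnz b hb) as [h1 [h2 h3]]. apply is_RInt_unique.
  apply (isr_ext (Bdec0 r1 r2 (/ N1) (/ N2) b)).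
  - intros t Ht.
    assert (t + b <> 0) by (apply tb_neq; auto; lra). unfold Bdec0. field; repeat split; auto.
  - eapply is_RInt_eq_val.
    + unfold Bdec0. do 2 (apply isr_cons; [exact hb|]). apply isr_nil.
    + unfold Kv, Ipol0. simpl INR. field; repeat split; auto.
Qed.

Lemma beta_cf0 n1 n2 m0 minf r1 r2 b : n1 <> 0%Z -> n2 <> 0%Z -> (0 < m0)%nat -> (0 < minf)%nat -> 1 < Rabs b ->
  beta4 n1 n2 m0 minf r1 r2 0 b = Bpol0 r1 r2 (/ IZR n1) (/ IZR n2) (/ INR m0) (/ INR minf) b / (b ^ 2 - 1) ^ 4.
Proof.
  intros hn1 hn2 hm0 hmi hb. pose proof (bnz b hb) as [h1 [h2 h3]].
  assert (IZR n1 <> 0) by (apply not_0_IZR; auto).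
  assert (IZR n2 <> 0) by (apply not_0_IZR; auto).
  assert (INR m0 <> 0) by (apply not_0_INR; lia).
  assert (INR minf <> 0) by (apply not_0_INR; lia).
  unfold beta4. rewrite int_cf0 by auto. assert (1 + b <> 0) by (rewrite Rplus_comm; auto).
  unfold Ipol0, Bpol0, pc. field. repeat split; auto.
Qed.

Lemma int_cf1 r1 r2 N1 N2 b : N1 <> 0 -> N2 <> 0 -> 1 < Rabs b ->
  RInt (fun t => (2 * r1 / N1 * (1 + r2 * t) + 2 * r2 / N2 * (1 + r1 * t)) * t ^ 1 * / (t + b) ^ 4) (-1) 1
  = Ipol1 r1 r2 (/ N1) (/ N2) b / (b ^ 2 - 1) ^ 3.
Proof.
  intros hn1 hn2 hb. pose proof (bnz b hb) as [h1 [h2 h3]]. apply is_RInt_unique.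
  apply (isr_ext (Bdec1 r1 r2 (/ N1) (/ N2) b)).
  - intros t Ht.
    assert (t + b <> 0) by (apply tb_neq; auto; lra). unfold Bdec1. field; repeat split; auto.
  - eapply is_RInt_eq_val.
    + unfold Bdec1. do 3 (apply isr_cons; [exact hb|]). apply isr_nil.
    + unfold Kv, Ipol1. simpl INR. field; repeat split; auto.
Qed.

Lemma beta_cf1 n1 n2 m0 minf r1 r2 b : n1 <> 0%Z -> n2 <> 0%Z -> (0 < m0)%nat -> (0 < minf)%nat -> 1 < Rabs b ->
  beta4 n1 n2 m0 minf r1 r2 1 b = Bpol1 r1 r2 (/ IZR n1) (/ IZR n2) (/ INR m0) (/ INR minf) b / (b ^ 2 - 1) ^ 4.
Proof.
  intros hn1 hn2 hm0 hmi hb. pose proof (bnz b hb) as [h1 [h2 h3]].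
  assert (IZR n1 <> 0) by (apply not_0_IZR; auto).
  assert (IZR n2 <> 0) by (apply not_0_IZR; auto).
  assert (INR m0 <> 0) by (apply not_0_INR; lia).
  assert (INR minf <> 0) by (apply not_0_INR; lia).
  unfold beta4. rewrite int_cf1 by auto. assert (1 + b <> 0) by (rewrite Rplus_comm; auto).
  unfold Ipol1, Bpol1, pc. field. repeat split; auto.
Qed.

Lemma poly_id r1 r2 i1 i2 j0 ji b :
  b * (Apol1 r1 r2 b * Bpol0 r1 r2 i1 i2 j0 ji b - Apol0 r1 r2 b * Bpol1 r1 r2 i1 i2 j0 ji b)
  - (Apol1 r1 r2 b * Bpol1 r1 r2 i1 i2 j0 ji b - Apol2 r1 r2 b * Bpol0 r1 r2 i1 i2 j0 ji b)
  = (b ^ 2 - 1) ^ 2 * sum_f_R0 (fun k => cc r1 r2 i1 i2 j0 ji k * b ^ k) 5.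
Proof.
  unfold Apol0, Apol1, Apol2, Bpol0, Bpol1. simpl sum_f_R0; unfold cc. field.
Qed.

Lemma hfun_eq n1 n2 m0 minf r1 r2 b : n1 <> 0%Z -> n2 <> 0%Z -> (0 < m0)%nat -> (0 < minf)%nat -> 1 < Rabs b ->
  hfun n1 n2 m0 minf r1 r2 b =
  sum_f_R0 (fun k => cc r1 r2 (/ IZR n1) (/ IZR n2) (/ INR m0) (/ INR minf) k * b ^ k) 5.
Proof.
  intros hn1 hn2 hm0 hmi hb. pose proof (bnz b hb) as [h1 [h2 h3]].
  unfold hfun. cbv beta zeta.
  rewrite alpha_cf0, alpha_cf1, alpha_cf2, beta_cf0, beta_cf1 by auto.
  apply (Rmult_eq_reg_l ((b ^ 2 - 1) ^ 2)); [| apply pow_nonzero; auto].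
  rewrite <- poly_id. field. auto.
Qed.

Definition Pv (c : nat -> R) (x : R) : R := sum_f_R0 (fun k => c k * x ^ k) 5.

Lemma poly_cont (c : nat -> R) : continuity (Pv c).
Proof.
  intro x. apply continuity_pt_filterlim. unfold Pv. cbn [sum_f_R0].
  apply (ex_derive_continuous (fun x => c 0%nat * x ^ 0 + c 1%nat * x ^ 1 + c 2%nat * x ^ 2 + c 3%nat * x ^ 3 + c 4%nat * x ^ 4 + c 5%nat * x ^ 5)).
  auto_derive. auto.
Qed.

Lemma term_bd c x k : 1 <= Rabs x -> (k <= 4)%nat -> Rabs (c * x ^ k) <= Rabs c * Rabs x ^ 4.
Proof.
  intros hx hk. rewrite Rabs_mult, <- RPow_abs. apply Rmult_le_compat_l; [apply Rabs_pos|].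
  apply Rle_pow; auto.
Qed.

Lemma tb2 y B : Rabs y <= B -> y <= B /\ - y <= B.
Proof. intros H. split; [apply Rle_trans with (Rabs y); [apply Rle_abs|auto] | apply Rle_trans with (Rabs y); [apply Rabs_maj2|auto]]. Qed.

Lemma poly_bound (c : nat -> R) x : 1 <= Rabs x ->
  let A := Rabs (c 0%nat) + Rabs (c 1%nat) + Rabs (c 2%nat) + Rabs (c 3%nat) + Rabs (c 4%nat) in
  Pv c x - c 5%nat * x ^ 5 <= A * Rabs x ^ 4 /\ - (Pv c x - c 5%nat * x ^ 5) <= A * Rabs x ^ 4.
Proof.
  intros hx A. unfold Pv, A. cbn [sum_f_R0].
  destruct (tb2 _ _ (term_bd (c 0%nat) x 0 hx ltac:(lia))).
  destruct (tb2 _ _ (term_bd (c 1%nat) x 1 hx ltac:(lia))).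
  destruct (tb2 _ _ (term_bd (c 2%nat) x 2 hx ltac:(lia))).
  destruct (tb2 _ _ (term_bd (c 3%nat) x 3 hx ltac:(lia))).
  destruct (tb2 _ _ (term_bd (c 4%nat) x 4 hx ltac:(lia))).
  split; lra.
Qed.

Lemma odd_root (c : nat -> R) : c 5%nat <> 0 -> 0 < Pv c 1 -> 0 < Pv c (-1) ->
  exists b, 1 < Rabs b /\ Pv c b = 0.
Proof.
  intros h5 hp1 hm1.
  set (A := Rabs (c 0%nat) + Rabs (c 1%nat) + Rabs (c 2%nat) + Rabs (c 3%nat) + Rabs (c 4%nat)).
  assert (hA : 0 <= A) by (unfold A; pose proof (Rabs_pos (c 0%nat)); pose proof (Rabs_pos (c 1%nat));
    pose proof (Rabs_pos (c 2%nat)); pose proof (Rabs_pos (c 3%nat)); pose proof (Rabs_pos (c 4%nat)); lra).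
  assert (hc : 0 < Rabs (c 5%nat)) by (apply Rabs_pos_lt; auto).
  set (M := 2 + A / Rabs (c 5%nat)).
  assert (hM : 2 <= M) by (unfold M; assert (0 <= A / Rabs (c 5%nat)) by (apply Rdiv_le_0_compat; lra); lra).
  assert (hcM : A + 2 * Rabs (c 5%nat) = Rabs (c 5%nat) * M) by (unfold M; field; lra).
  assert (hy : 0 < M ^ 4) by (apply pow_lt; lra).
  assert (key : A * M ^ 4 < Rabs (c 5%nat) * M * M ^ 4).
  { apply Rmult_lt_compat_r; auto. lra. }
  destruct (Rlt_or_le 0 (c 5%nat)) as [hpos | hneg].
  -
    assert (hx : 1 <= Rabs (- M)) by (rewrite Rabs_Ropp, Rabs_pos_eq; lra).
    destruct (poly_bound c (- M) hx) as [b1 b2]. fold A in b1, b2.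
    rewrite Rabs_Ropp, Rabs_pos_eq in b1 by lra.
    rewrite Rabs_pos_eq in key by lra.
    assert (e5 : (- M) ^ 5 = - (M * M ^ 4)) by ring.
    rewrite e5 in b1.
    assert (hPm : Pv c (- M) < 0) by nra.
    destruct (IVT (Pv c) (- M) (-1) (poly_cont c) ltac:(lra) hPm hm1) as [z [hz1 hz2]].
    exists z. split; auto.
    destruct (Req_dec z (-1)) as [e|ne].
    + subst z. lra.
    + rewrite Rabs_left by lra. lra.
  - assert (hneg' : c 5%nat < 0) by (destruct hneg; auto; exfalso; auto).
    assert (hx : 1 <= Rabs M) by (rewrite Rabs_pos_eq; lra).
    destruct (poly_bound c M hx) as [b1 b2]. fold A in b1, b2.
    rewrite Rabs_pos_eq in b1 by lra.
    rewrite Rabs_left in key by lra.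
    assert (e5 : M ^ 5 = M * M ^ 4) by ring.
    rewrite e5 in b1.
    assert (hPm : Pv c M < 0) by nra.
    destruct (IVT (fun x => - Pv c x) 1 M) as [z [hz1 hz2]].
    + apply continuity_opp, poly_cont.
    + lra.
    + lra.
    + lra.
    + exists z. split.
      * destruct (Req_dec z 1) as [e|ne].
        -- subst z. lra.
        -- rewrite Rabs_pos_eq by lra. lra.
      * lra.
Qed.

Theorem mainTheorem15 (n1 n2 : Z) (m0 minf : nat) (r1 r2 : R) :
  n1 <> 0%Z -> n2 <> 0%Z -> (0 < m0)%nat -> (0 < minf)%nat ->
  0 < Rabs r1 < 1 -> 0 < Rabs r2 < 1 ->
  0 < r1 * IZR n1 -> 0 < r2 * IZR n2 ->
  (exists c : nat -> R,
     (forall b, 1 < Rabs b ->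
        hfun n1 n2 m0 minf r1 r2 b = sum_f_R0 (fun k => c k * b ^ k) 5) /\
     c 5%nat = 2 * ffun n1 n2 m0 minf r1 r2
               / (9 * INR m0 * INR minf * IZR n1 * IZR n2)) /\
  (exists L, filterlim (hfun n1 n2 m0 minf r1 r2) (at_right 1) (locally L) /\ 0 < L) /\
  (exists L, filterlim (hfun n1 n2 m0 minf r1 r2) (at_left (-1)) (locally L) /\ 0 < L) /\
  (ffun n1 n2 m0 minf r1 r2 <> 0 ->
     exists b, 1 < Rabs b /\ hfun n1 n2 m0 minf r1 r2 b = 0).
Proof.
  intros hn1 hn2 hm0 hmi hr1 hr2 hs1 hs2.
  assert (N1 : IZR n1 <> 0) by (apply not_0_IZR; auto).
  assert (N2 : IZR n2 <> 0) by (apply not_0_IZR; auto).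
  assert (M0 : 0 < INR m0) by (apply lt_0_INR; auto).
  assert (Mi : 0 < INR minf) by (apply lt_0_INR; auto).
  destruct hr1 as [_ hr1]. destruct hr2 as [_ hr2].
  apply Rabs_def2 in hr1. apply Rabs_def2 in hr2.
  set (C := cc r1 r2 (/ IZR n1) (/ IZR n2) (/ INR m0) (/ INR minf)).
  assert (HE : forall b, 1 < Rabs b -> hfun n1 n2 m0 minf r1 r2 b = Pv C b)
    by (intros b hb; apply hfun_eq; auto).
  assert (P1 : Pv C 1 = 32/3 * / INR minf * (1 - r1) ^ 2 * (1 - r2) ^ 2).
  { unfold Pv, C. cbn [sum_f_R0]. unfold cc. field. lra. }
  assert (Pm1 : Pv C (-1) = 32/3 * / INR m0 * (1 + r1) ^ 2 * (1 + r2) ^ 2).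
  { unfold Pv, C. cbn [sum_f_R0]. unfold cc. field. lra. }
  assert (hP1 : 0 < Pv C 1).
  { rewrite P1. repeat apply Rmult_lt_0_compat; try lra;
    try (apply Rinv_0_lt_compat; auto); apply pow_lt; lra. }
  assert (hPm1 : 0 < Pv C (-1)).
  { rewrite Pm1. repeat apply Rmult_lt_0_compat; try lra;
    try (apply Rinv_0_lt_compat; auto); apply pow_lt; lra. }
  assert (C5 : C 5%nat = 2 * ffun n1 n2 m0 minf r1 r2 / (9 * INR m0 * INR minf * IZR n1 * IZR n2)).
  { unfold C, cc, ffun. field. repeat split; auto; lra. }
  split; [| split; [| split]].
  - exists C. split; auto.
  - exists (Pv C 1). split; auto.
    apply (filterlim_ext_loc (Pv C)).
    + unfold at_right, within, locally. exists (mkposreal 1 Rlt_0_1). intros y _ hy.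
      symmetry. apply HE. rewrite Rabs_pos_eq; lra.
    + apply (filterlim_filter_le_1 (F := locally 1)).
      * apply filter_le_within.
      * apply continuity_pt_filterlim, poly_cont.
  - exists (Pv C (-1)). split; auto.
    apply (filterlim_ext_loc (Pv C)).
    + unfold at_left, within, locally. exists (mkposreal 1 Rlt_0_1). intros y _ hy.
      symmetry. apply HE. rewrite Rabs_left; lra.
    + apply (filterlim_filter_le_1 (F := locally (-1))).
      * apply filter_le_within.
      * apply continuity_pt_filterlim, poly_cont.
  - intros hf.
    assert (h5 : C 5%nat <> 0).
    { rewrite C5. unfold Rdiv. apply Rmult_integral_contrapositive; split.
      - apply Rmult_integral_contrapositive; split; auto; lra.
      - apply Rinv_neq_0_compat. repeat (apply Rmult_integral_contrapositive; split); auto; lra. }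
    destruct (odd_root C h5 hP1 hPm1) as [b [hb hz]].
    exists b. split; auto. rewrite HE; auto.
Qed.
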